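(* Let $\mathcal{G}\subset\mathcal{S}$ be closed under convolution (i.e. $f*F\in\mathcal{G}$ whenever $f,F\in\mathcal{G}$), and let $\mathcal{G}_H^0$ be its harmonic analogue. Then: (i) for every $f\in\mathcal{G}_H^0$, $f*f\in\mathcal{G}_H^0$; (ii) if $(f+F)/2\in\mathcal{G}$ for all $f,F\in\mathcal{G}$, then $\mathcal{G}_H^0$ is closed under convolution, i.e. $f_1*f_2\in\mathcal{G}_H^0$ for all $f_1,f_2\in\mathcal{G}_H^0$.
   Context: $\mathbb{D}$ is the open unit disk. $\mathcal{S}$ is the class of analytic univalent functions $f$ in $\mathbb{D}$ with $f(0)=0$, $f'(0)=1$. For $\mathcal{G}\subset\mathcal{S}$, its harmonic analogue $\mathcal{G}_H^0$ is the class of harmonic functions $f=h+\bar g$ ($h,g$ analytic in $\mathbb{D}$) such that $h+\epsilon g\in\mathcal{G}$ for every $\epsilon\in\mathbb{C}$ with $|\epsilon|=1$. For analytic $f(z)=\sum a_nz^n$, $F(z)=\sum A_nz^n$, the convolution (Hadamard product) is $(f*F)(z)=\sum a_nA_nz^n$. For harmonic $f=h+\bar g$, $F=H+\bar G$, the harmonic convolution is $f*F=h*H+\overline{g*G}$. *)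

(* Defs.v *)
From Stdlib Require Import Reals.
From Coquelicot Require Import Coquelicot.
Open Scope C_scope.

(* An analytic function in the unit disk D is represented by its Taylor
   coefficients a : nat -> C, f(z) = sum_n a n z^n, the series converging
   for every |z| < 1 (i.e. radius of convergence >= 1). *)
Definition coeffs := nat -> C.

Definition in_disk (z : C) : Prop := (Cmod z < 1)%R.

Definition has_value (a : coeffs) (z v : C) : Prop :=
  is_series (fun n => a n * Cpow z n) v.

Definition analytic_disk (a : coeffs) : Prop :=
  forall z, in_disk z -> ex_series (fun n => a n * Cpow z n).

Definition univalent_disk (a : coeffs) : Prop :=
  forall z1 z2 v, in_disk z1 -> in_disk z2 ->
    has_value a z1 v -> has_value a z2 v -> z1 = z2.

(* The class S: analytic univalent in D with f(0)=0 (a_0 = 0), f'(0)=1 (a_1 = 1). *)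
Definition classS (a : coeffs) : Prop :=
  analytic_disk a /\ univalent_disk a /\ a 0%nat = 0 /\ a 1%nat = 1.

Definition conv (a b : coeffs) : coeffs := fun n => a n * b n.

(* A harmonic function f = h + conj g is represented by the pair (h, g). *)
Definition harm := (coeffs * coeffs)%type.

Definition hconv (f F : harm) : harm :=
  (conv (fst f) (fst F), conv (snd f) (snd F)).

Definition harmonic_analogue (G : coeffs -> Prop) (f : harm) : Prop :=
  analytic_disk (fst f) /\ analytic_disk (snd f) /\
  forall eps : C, Cmod eps = 1%R ->
    G (fun n => fst f n + eps * snd f n).

(* Main.v *)
Require Import Defs.
From Stdlib Require Import Reals Lra Psatz.
From Coquelicot Require Import Coquelicot.
From Stdlib Require Import FunctionalExtensionality.
Open Scope C_scope.
Lemma an_comb (a b : coeffs) (c d : C) : analytic_disk a -> analytic_disk b ->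
  analytic_disk (fun n => c * a n + d * b n).
Proof.
  intros Ha Hb z Hz.
  pose proof (@ex_series_scal_l C_AbsRing C_NormedModule c _ (Ha z Hz)) as H1.
  pose proof (@ex_series_scal_l C_AbsRing C_NormedModule d _ (Hb z Hz)) as H2.
  pose proof (@ex_series_plus C_AbsRing C_NormedModule _ _ H1 H2) as H3.
  eapply (@ex_series_ext C_AbsRing C_NormedModule); [|exact H3].
  intros n; simpl. change (c * (a n * Cpow z n) + d * (b n * Cpow z n) = (c * a n + d * b n) * Cpow z n). ring.
Qed.
Lemma csqrt (w : C) : Cmod w = 1%R -> exists s : C, Cmod s = 1%R /\ s * s = w.
Proof.
  destruct w as [u v]. unfold Cmod; simpl. intros H.
  assert (Huv : (u*u + v*v = 1)%R).
  { assert (H0 : (0 <= u^2+v^2)%R) by nra.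
    pose proof (sqrt_sqrt _ H0) as E. simpl in E. rewrite H in E. nra. }
  assert (Hp : (0 <= (1+u)/2)%R) by nra.
  assert (Hm : (0 <= (1-u)/2)%R) by nra.
  pose proof (sqrt_sqrt _ Hp) as Ep. pose proof (sqrt_sqrt _ Hm) as Em.
  assert (Hprod : (sqrt ((1+u)/2) * sqrt ((1-u)/2) = Rabs v / 2)%R).
  { rewrite <- sqrt_mult by assumption.
    replace ((1+u)/2*((1-u)/2))%R with (Rsqr (Rabs v / 2)).
    - apply sqrt_Rsqr. pose proof (Rabs_pos v). lra.
    - unfold Rsqr. destruct (Rcase_abs v) as [Hv|Hv]; [rewrite Rabs_left by lra|rewrite Rabs_right by lra]; nra. }
  destruct (Rle_lt_dec 0 v) as [Hv|Hv].
  - exists (sqrt ((1+u)/2), sqrt ((1-u)/2)). split.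
    + unfold Cmod; simpl. transitivity (sqrt 1); [f_equal; nra | apply sqrt_1].
    + rewrite Rabs_right in Hprod by lra.
      unfold Cmult; simpl. f_equal; nra.
  - exists (sqrt ((1+u)/2), - sqrt ((1-u)/2))%R. split.
    + unfold Cmod; simpl. transitivity (sqrt 1); [f_equal; nra | apply sqrt_1].
    + rewrite Rabs_left in Hprod by lra.
      unfold Cmult; simpl. f_equal; nra.
Qed.

Lemma an_ext (a b : coeffs) : (forall n, a n = b n) -> analytic_disk a -> analytic_disk b.
Proof.
  intros E Ha z Hz. eapply (@ex_series_ext C_AbsRing C_NormedModule); [|exact (Ha z Hz)].
  intros n; simpl. rewrite E. reflexivity.
Qed.

Lemma G_ext (G : coeffs -> Prop) (a b : coeffs) : (forall n, a n = b n) -> G a -> G b.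
Proof.
  intros E Ha. replace b with a; [exact Ha|]. apply functional_extensionality. exact E.
Qed.

Lemma Cmod_opp1 (s : C) : Cmod s = 1%R -> Cmod (- s) = 1%R.
Proof. intros H. rewrite Cmod_opp. exact H. Qed.

Lemma Cmod_m1' : Cmod (- (1)) = 1%R.
Proof. apply Cmod_m1. Qed.

Theorem theorem2p9 (G : coeffs -> Prop)
  (HGS : forall a, G a -> classS a)
  (HGconv : forall a b, G a -> G b -> G (conv a b)) :
  (forall f : harm, harmonic_analogue G f -> harmonic_analogue G (hconv f f)) /\
  ((forall a b, G a -> G b -> G (fun n => (a n + b n) / 2)) ->
   forall f1 f2 : harm, harmonic_analogue G f1 -> harmonic_analogue G f2 ->
     harmonic_analogue G (hconv f1 f2)).
Proof.
  assert (Key : forall a b, (forall eps : C, Cmod eps = 1%R -> G (fun n => a n + eps * b n)) ->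
            analytic_disk a /\ analytic_disk b).
  { intros a b H.
    destruct (HGS _ (H 1 Cmod_1)) as [A1 _].
    destruct (HGS _ (H (-(1)) Cmod_m1)) as [A2 _].
    split.
    - apply (an_ext (fun n => (/2) * (a n + 1 * b n) + (/2) * (a n + (-(1)) * b n))).
      + intros n. field.
      + apply an_comb; assumption.
    - apply (an_ext (fun n => (/2) * (a n + 1 * b n) + (-(/2)) * (a n + (-(1)) * b n))).
      + intros n. field.
      + apply an_comb; assumption. }
  split.
  - intros [h g] [_ [_ Hf]]. simpl in Hf.
    assert (HG : forall eps : C, Cmod eps = 1%R ->
       G (fun n => fst (hconv (h, g) (h, g)) n + eps * snd (hconv (h, g) (h, g)) n)).
    { intros eps Heps.
      destruct (csqrt (- eps)) as [s [Hs Hss]]. { rewrite Cmod_opp. exact Heps. }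
      pose proof (HGconv _ _ (Hf s Hs) (Hf (- s) (Cmod_opp1 s Hs))) as Hc.
      eapply G_ext; [|exact Hc]. intros n. unfold conv; simpl.
      replace eps with (- (s * s)) by (rewrite Hss; ring). unfold conv. ring. }
    destruct (Key _ _ HG) as [A B].
    split; [exact A|split; [exact B|exact HG]].
  - intros Havg [h1 g1] [h2 g2] [_ [_ Hf1]] [_ [_ Hf2]]. simpl in Hf1, Hf2.
    assert (HG : forall eps : C, Cmod eps = 1%R ->
       G (fun n => fst (hconv (h1, g1) (h2, g2)) n + eps * snd (hconv (h1, g1) (h2, g2)) n)).
    { intros eps Heps.
      pose proof (HGconv _ _ (Hf1 eps Heps) (Hf2 1 Cmod_1)) as Hc1.
      pose proof (HGconv _ _ (Hf1 (- eps) (Cmod_opp1 eps Heps)) (Hf2 (-(1)) Cmod_m1)) as Hc2.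
      pose proof (Havg _ _ Hc1 Hc2) as Hc.
      eapply G_ext; [|exact Hc]. intros n. simpl. unfold conv. field. }
    destruct (Key _ _ HG) as [A B].
    split; [exact A|split; [exact B|exact HG]].
Qed.
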